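(* Let $G$ be a claw-free graph and $C_0$ an even hole of $G$. If a vertex $\mathbf{t}$ lies in $\Gamma[C_0]$, then $\mathbf{t}\in\Gamma[C]$ for every even hole $C\in\langle C_0\rangle$.
   Context: A hole is an induced cycle of length $\ge4$; even hole: even length. Claw-free: no induced $K_{1,3}$. For a vertex set $U$, $\Gamma[U]=\bigcup_{\mathbf{j}\in U}(\Gamma(\mathbf{j})\cup\{\mathbf{j}\})$ is its closed neighbourhood. Single-vertex deformation: if $C$ is an even hole and $\mathbf{j}\notin C$ has $\Gamma_C(\mathbf{j})=\{\mathbf{u},\mathbf{k},\mathbf{v}\}$ with $\mathbf{u},\mathbf{v}$ the two neighbours of $\mathbf{k}$ in $C$, then $(C\setminus\{\mathbf{k}\})\cup\{\mathbf{j}\}$ is a single-vertex deformation of $C$. The deformation closure $\langle C_0\rangle$ is the smallest set of holes containing $C_0$ and closed under single-vertex deformations. *)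

(* Defs.v *)
From mathcomp Require Import all_boot.
Set Implicit Arguments. Unset Strict Implicit. Unset Printing Implicit Defensive.

Section Graph.
Variables (T : finType) (e : rel T).

Definition simple_graph : Prop := symmetric e /\ irreflexive e.

Definition claw_free : Prop :=
  ~ exists a b c d : T,
      [&& e a b, e a c, e a d, b != c, b != d, c != d,
          ~~ e b c, ~~ e b d & ~~ e c d].

(* C is a hole (induced cycle of length >= 4): its vertices can be listed
   without repetition as s, size s >= 4, so that two vertices of C are
   adjacent iff they are cyclically consecutive in s. *)
Definition hole (C : {set T}) : Prop :=
  exists s : seq T,
    [/\ uniq s, 4 <= size s, C = [set x in s] &
        forall (x0 : T) i j, i < size s -> j < size s ->
          e (nth x0 s i) (nth x0 s j) =
          (j == i.+1 %% size s) || (i == j.+1 %% size s) ].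

Definition even_hole (C : {set T}) : Prop := hole C /\ ~~ odd #|C|.

Definition nbhd_in (C : {set T}) (j : T) : {set T} := [set x in C | e j x].

Definition closed_nbhd (U : {set T}) : {set T} :=
  [set x | [exists y in U, (x == y) || e y x]].

Inductive deform_closure (C0 : {set T}) : {set T} -> Prop :=
| dc_base : deform_closure C0 C0
| dc_step (C : {set T}) (j k u v : T) :
    deform_closure C0 C -> even_hole C -> j \notin C -> k \in C ->
    u != v -> nbhd_in C k = [set u; v] ->
    nbhd_in C j = [set u; k; v] ->
    deform_closure C0 ((C :\ k) :|: [set j]).
End Graph.

(* Main.v *)
Require Import Defs.
From mathcomp Require Import all_boot.
From mathcomp Require Import zify.

Lemma modS_cases (n x : nat) : x < n -> x.+1 %% n = x.+1 /\ x.+1 < n \/ x.+1 = n /\ x.+1 %% n = 0.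
Proof.
move=> H; case: (ltngtP x.+1 n) => h.
- by left; rewrite modn_small.
- lia.
- by right; rewrite h modnn.
Qed.

Lemma no_triangle (n a b c : nat) : 4 <= n -> a < n -> b < n -> c < n -> b != c ->
  (b == a.+1 %% n) || (a == b.+1 %% n) ->
  (c == a.+1 %% n) || (a == c.+1 %% n) ->
  (c == b.+1 %% n) || (b == c.+1 %% n) -> False.
Proof.
move=> H4 Ha Hb Hc Hbc.
case: (@modS_cases _ _ Ha) => [[-> ?]|[? ->]];
case: (@modS_cases _ _ Hb) => [[-> ?]|[? ->]];
case: (@modS_cases _ _ Hc) => [[-> ?]|[? ->]];
move=> /orP[/eqP ?|/eqP ?] /orP[/eqP ?|/eqP ?] /orP[/eqP ?|/eqP ?]; lia.
Qed.

Lemma hole_nbrs_nonadj (T : finType) (e : rel T) (C : {set T}) (k u v : T) :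
  hole e C -> k \in C -> u \in C -> v \in C -> u != v -> e k u -> e k v -> ~~ e u v.
Proof.
move=> [s [Hu H4 HC He]] kC uC vC Huv eku ekv.
apply/negP => euv.
move: kC uC vC; rewrite HC !inE => kC uC vC.
have ik : index k s < size s by rewrite index_mem.
have iu : index u s < size s by rewrite index_mem.
have iv : index v s < size s by rewrite index_mem.
have Ek := He k (index k s) (index u s) ik iu.
have Ek' := He k (index k s) (index v s) ik iv.
have Eu := He k (index u s) (index v s) iu iv.
rewrite !nth_index // in Ek Ek' Eu.
rewrite eku in Ek; rewrite ekv in Ek'; rewrite euv in Eu.
apply: (@no_triangle (size s) (index k s) (index u s) (index v s)) => //.
apply: contra Huv => /eqP /(congr1 (fun i => nth k s i)).
by rewrite !nth_index // => ->.
Qed.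

Theorem lemma4 (T : finType) (e : rel T) (C0 : {set T}) (t : T) :
  simple_graph e -> claw_free e -> even_hole e C0 ->
  t \in closed_nbhd e C0 ->
  forall C : {set T}, deform_closure e C0 C -> even_hole e C ->
    t \in closed_nbhd e C.
Proof.
move=> [Hsym Hirr] Hcf _ Ht0 C HC.
elim: C / HC => [//|C j k u v _ IH HevC jC kC Huv Hk Hj _].
have HtC := IH HevC.
have uk : u \in nbhd_in e C k by rewrite Hk !inE eqxx.
have vk : v \in nbhd_in e C k by rewrite Hk !inE eqxx orbT.
have kj : k \in nbhd_in e C j by rewrite Hj !inE eqxx orbT.
move: uk vk kj; rewrite !inE => /andP[uC eku] /andP[vC ekv] /andP[_ ejk].
apply: contraT => /negP Hn; exfalso.
have Hno : forall y, y \in (C :\ k) :|: [set j] -> (t == y) || e y t -> False.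
  move=> y yC ty; apply: Hn; apply/existsP; exists y; by rewrite yC ty.
have uk' : u != k by apply: contraTneq eku => ->; rewrite Hirr.
have vk' : v != k by apply: contraTneq ekv => ->; rewrite Hirr.
have uC' : u \in (C :\ k) :|: [set j] by rewrite !inE uk' uC.
have vC' : v \in (C :\ k) :|: [set j] by rewrite !inE vk' vC.
have jC' : j \in (C :\ k) :|: [set j] by rewrite !inE eqxx orbT.
move: HtC; rewrite /closed_nbhd inE => /existsP[y0 /andP[yC0 ty0]].
move: y0 yC0 ty0 => y yC ty.
case: (eqVneq y k) => [Eyk|ykn]; last first.
  by apply: (Hno y) => //; rewrite !inE ykn yC.
subst y.
case/orP: ty => [/eqP Etk|ekt].
  subst t; apply: (Hno j) => //; by rewrite ejk orbT.
apply: Hcf; exists k, t, u, v.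
have tu : t != u by apply/negP => /eqP Etu; apply: (Hno u) => //; rewrite Etu eqxx.
have tv : t != v by apply/negP => /eqP Etu; apply: (Hno v) => //; rewrite Etu eqxx.
have ntu : ~~ e t u by apply/negP => etu; apply: (Hno u) => //; rewrite Hsym etu orbT.
have ntv : ~~ e t v by apply/negP => etu; apply: (Hno v) => //; rewrite Hsym etu orbT.
rewrite ekt eku ekv tu tv Huv ntu ntv /=.
case: HevC => Hh _; exact: (@hole_nbrs_nonadj _ _ _ _ _ _ Hh kC uC vC Huv eku ekv).
Qed.
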